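(* Let $(X,\overline p)$ be a perverse space and let $x\in X$ be an isolated singular point, i.e. $\{x\}$ is a singular stratum of $X$. Set $\ell=D\overline p(\{x\})+1$, and let $X\setminus\{x\}$ carry the induced filtration and perversity. Then the $\ell$-skeleta of $\mathscr G_{\overline p}X$ and $\mathscr G_{\overline p}(X\setminus\{x\})$ are isomorphic.
   Context: Filtered spaces. A filtered space of formal dimension $n$ is a nonempty space $X$ with closed subsets $\emptyset=X_{-1}\subseteq\cdots\subseteq X_{n-1}\subsetneq X_n=X$. Strata are the nonempty connected components of $X_i\setminus X_{i-1}$, with codimension $n-i$. Strata in $X\setminus X_{n-1}$ are regular. An open subset $U$ has the induced filtration $U\cap X_i$ and the induced perversity, namely the value of $\overline p$ on the stratum of $X$ containing a given stratum of $U$. Perversities. A perversity is a map $\overline p$ from strata to $\mathbb Z\cup\{\pm\infty\}$ vanishing on regular strata. The top perversity is $\overline t(S)=\operatorname{codim}S-2$, and $D\overline p=\overline t-\overline p$. Full simplices and the Gajer space. A simplex $\sigma\colon\Delta^j\to X$ is $\overline p$-allowable if $\dim\sigma^{-1}S\le j-\operatorname{codim}S+\overline p(S)$ for every singular stratum $S$. Here $\dim$ is polyhedral dimension, with $\dim\emptyset=-\infty$. A simplex is $\overline p$-full if it and all its iterated faces are allowable. $\mathscr G_{\overline p}X\subseteq\mathrm{Sing}\,X$ is the simplicial set of $\overline p$-full simplices. *)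

(* Defs.v *)
From HB Require Import structures.
From mathcomp Require Import all_boot all_order all_algebra.
From mathcomp Require Import all_classical all_reals all_analysis.
From mathcomp Require Import Rstruct Rstruct_topology.

Set Implicit Arguments.
Unset Strict Implicit.
Unset Printing Implicit Defensive.

Import Order.TTheory GRing.Theory Num.Theory.
Local Open Scope classical_set_scope.
Local Open Scope ring_scope.

Notation RR := Rdefinitions.R.

Inductive eint := EINeg | EIFin of int | EIPos.

Definition eadd (a b : eint) : eint :=
  match a, b with
  | EIFin x, EIFin y => EIFin (x + y)
  | EIPos, EINeg | EINeg, EIPos => EIFin 0 (* never used *)
  | EIPos, _ | _, EIPos => EIPos
  | EINeg, _ | _, EINeg => EINeg
  end.

Definition eopp (a : eint) : eint :=
  match a with EINeg => EIPos | EIFin x => EIFin (- x) | EIPos => EINeg end.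

Definition nat_le_eint (j : nat) (l : eint) : Prop :=
  match l with EINeg => False | EIFin z => (j%:Z <= z) | EIPos => True end.

Section Filtered.
Variables (X : topologicalType) (n : nat) (F : nat -> set X).
(* F i stands for X_i (0 <= i <= n); X_{-1} is the empty set. *)

Definition Fprev (i : nat) : set X := if i is i'.+1 then F i' else set0.

Definition filtered_space : Prop :=
  [/\ (exists y : X, True),
      (forall i, (i <= n)%N -> closed (F i)),
      (forall i, (i < n)%N -> F i `<=` F i.+1),
      F n = setT &
      Fprev n != setT].

Definition piece (i : nat) : set X := F i `\` Fprev i.

(** S is a stratum of formal level i (codimension n - i) *)
Definition is_stratum_at (i : nat) (S : set X) : Prop :=
  (i <= n)%N /\ exists2 y, piece i y & S = connected_component (piece i) y.

Definition is_stratum (S : set X) : Prop := exists i, is_stratum_at i S.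

(** perversity: vanishes on regular strata (values on non-strata irrelevant) *)
Definition perversity (p : set X -> eint) : Prop :=
  forall S, is_stratum_at n S -> p S = EIFin 0.

(** value of the top perversity and of D p on a stratum of codimension n - i *)
Definition top_perv_at (i : nat) : eint := EIFin (n%:Z - i%:Z - 2).
Definition dual_perv_at (p : set X -> eint) (i : nat) (S : set X) : eint :=
  eadd (top_perv_at i) (eopp (p S)).
End Filtered.

Definition induced_filt (X : topologicalType) (A : set X) (F : nat -> set X)
  : nat -> set (set_type A) := fun i => set_val @^-1` F i.

Definition induced_perv (X : topologicalType) (n : nat) (F : nat -> set X)
  (A : set X) (p : set X -> eint) : set (set_type A) -> eint :=
  fun S => p (xget set0 [set S' : set X | is_stratum n F S' /\ set_val @` S `<=` S']).

Arguments induced_filt {X} A F _ _.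
Arguments induced_perv {X} n F A p _.

Definition stdsimplex (j : nat) : set 'rV[RR]_(j.+1) :=
  [set v | (forall b, 0 <= v 0 b) /\ \sum_b v 0 b = 1].
Arguments stdsimplex : clear implicits.

(** the affine map Δ^k -> Δ^j sending vertex e_a to e_(f a) *)
Definition simp_op_row k j (f : 'I_(k.+1) -> 'I_(j.+1)) (v : 'rV[RR]_(k.+1))
  : 'rV[RR]_(j.+1) := \row_b \sum_(a | f a == b) v 0 a.

Lemma simp_op_in k j (f : 'I_(k.+1) -> 'I_(j.+1)) (v : set_type (stdsimplex k)) :
  simp_op_row f (set_val v) \in stdsimplex j.
Proof.
apply: mem_set; have [v0 v1] : stdsimplex k (set_val v) by case: v => w /= wP; exact: set_mem wP.
split.
  by move=> b; rewrite mxE; apply: sumr_ge0 => a _.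
rewrite -v1 [RHS](partition_big f xpredT) //=.
by apply: eq_bigr => b _; rewrite mxE.
Qed.

Definition simp_op k j (f : 'I_(k.+1) -> 'I_(j.+1))
  : set_type (stdsimplex k) -> set_type (stdsimplex j) :=
  fun v => SigSub (simp_op_in f v).

Definition coface j (i : 'I_(j.+2)) : 'I_(j.+1) -> 'I_(j.+2) := lift i.
Definition codegen j (i : 'I_(j.+1)) : 'I_(j.+2) -> 'I_(j.+1) :=
  fun a => inord (if (a <= i)%N then nat_of_ord a else (nat_of_ord a).-1).

Definition sface (Y : Type) j (i : 'I_(j.+2)) (s : set_type (stdsimplex j.+1) -> Y)
  : set_type (stdsimplex j) -> Y := s \o simp_op (coface i).
Definition sdegen (Y : Type) j (i : 'I_(j.+1)) (s : set_type (stdsimplex j) -> Y)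
  : set_type (stdsimplex j.+1) -> Y := s \o simp_op (codegen i).

Definition conv_hull m (t : seq 'rV[RR]_m) : set 'rV[RR]_m :=
  [set v | exists c : 'I_(size t) -> RR,
     [/\ forall a, 0 <= c a, \sum_a c a = 1 & v = \sum_a c a *: t`_a]].

(** polyhedral dimension of A is <= k: A is contained in a (compact) polyhedron
    of dimension <= k, i.e. in a finite union of convex hulls of at most
    k+1 points.  For k < 0 this forces A = set0 (dim set0 = -oo). *)
Definition polydim_le m (A : set 'rV[RR]_m) (k : int) : Prop :=
  exists s : seq (seq 'rV[RR]_m),
    (forall t, t \in s -> (size t)%:Z <= k + 1) /\
    A `<=` \bigcup_(t in [set t | t \in s]) conv_hull t.

Section Gajer.
Variables (X : topologicalType) (n : nat) (F : nat -> set X) (p : set X -> eint).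

Definition dim_bound j (s : set_type (stdsimplex j) -> X) (i : nat) (S : set X) : Prop :=
  let P := set_val @` (s @^-1` S) in
  match p S with
  | EINeg => P = set0
  | EIFin q => polydim_le P (j%:Z - (n%:Z - i%:Z) + q)
  | EIPos => True
  end.

Definition allowable j (s : set_type (stdsimplex j) -> X) : Prop :=
  forall i S, (i < n)%N -> is_stratum_at n F i S -> dim_bound s i S.

(** s and all its iterated faces are allowable: faces of Δ^j correspond to
    strictly increasing maps [k] -> [j] *)
Definition full j (s : set_type (stdsimplex j) -> X) : Prop :=
  forall k (f : 'I_(k.+1) -> 'I_(j.+1)),
    (forall a b : 'I_(k.+1), (a < b)%N -> (f a < f b)%N) -> allowable (s \o simp_op f).

Definition Gajer j : set (set_type (stdsimplex j) -> X) :=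
  [set s | continuous s /\ full s].
End Gajer.
Arguments Gajer {X} n F p j.

(** * Skeleta and isomorphisms of simplicial sets
    K is a simplicial subset of Sing Y (closed under faces and degeneracies). *)
Fixpoint skel (Y : Type) (K : forall j, set (set_type (stdsimplex j) -> Y)) (l : eint)
  (j : nat) : set (set_type (stdsimplex j) -> Y) :=
  fun s => K j s /\
    (nat_le_eint j l \/
     match j return (set_type (stdsimplex j) -> Y) -> Prop with
     | 0 => fun _ => False
     | j'.+1 => fun s => exists (i : 'I_(j'.+1)) t, @skel Y K l j' t /\ s = sdegen i t
     end s).
Arguments skel {Y} K l j.

Definition skel_iso (Y Z : Type) (K : forall j, set (set_type (stdsimplex j) -> Y))
  (L : forall j, set (set_type (stdsimplex j) -> Z)) (l : eint) : Prop :=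
  exists phi : forall j, (set_type (stdsimplex j) -> Y) -> (set_type (stdsimplex j) -> Z),
   [/\ (forall j s, skel K l j s -> skel L l j (phi j s)),
       (forall j s t, skel K l j s -> skel K l j t -> phi j s = phi j t -> s = t),
       (forall j t, skel L l j t -> exists2 s, skel K l j s & phi j s = t),
       (forall j (i : 'I_(j.+2)) s, skel K l j.+1 s ->
            phi j (sface i s) = sface i (phi j.+1 s)) &
       (forall j (i : 'I_(j.+1)) s, skel K l j s ->
            phi j.+1 (sdegen i s) = sdegen i (phi j s))].

(* Main.v *)
Require Import Defs.
From HB Require Import structures.
From mathcomp Require Import all_boot all_order all_algebra.
From mathcomp Require Import all_classical all_reals all_analysis.
From mathcomp Require Import Rstruct Rstruct_topology.
From mathcomp Require Import zify.
Local Open Scope classical_set_scope.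
Local Open Scope ring_scope.
Set Implicit Arguments.
Unset Strict Implicit.
Unset Printing Implicit Defensive.
Import Order.TTheory GRing.Theory Num.Theory.
Set Warnings "-notation-overridden,-ambiguous-paths,-notation-incompatible-prefix".
Section Topo.
Context {X : topologicalType} (A : set X).

Lemma sv_cont : continuous (@set_val X A).
Proof. exact: (@initial_continuous A X set_val). Qed.

Lemma sv_inj : injective (@set_val X A).
Proof. by move=> a b; rewrite set_valE => /val_inj. Qed.

Lemma sv_exist y (h : y \in A) : set_val (exist _ y h : set_type A) = y.
Proof. by rewrite set_valE. Qed.

Lemma conn_image (C : set (set_type A)) : connected C -> connected (set_val @` C).
Proof.
move=> cC; apply: connected_continuous_connected => //.
apply: continuous_subspaceT; exact: sv_cont.
Qed.

Lemma conn_preimage (D : set X) : D `<=` A -> connected D ->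
  connected (set_val @^-1` D : set (set_type A)).
Proof.
move=> DA cD B B0 [C1 oC1 BC1] [C2 cC2 BC2].
case: oC1 => O oO eO.
have oC2' : open (~` C2) by exact: closed_openC.
case: oC2' => O2 oO2 eO2.
have lift : forall z, D z -> exists u : set_type A, set_val u = z.
  move=> z Dz; have Az : z \in A by apply/mem_set/DA.
  by exists (exist _ z Az); rewrite sv_exist.
have key : set_val @` B = D.
  apply: (cD (set_val @` B)).
  - by case: B0 => b Bb; exists (set_val b), b.
  - exists O => //; apply/seteqP; split.
    + move=> z [b Bb <-]; rewrite BC1 in Bb; case: Bb => Db C1b; split => //.
      by rewrite -eO in C1b.
    + move=> z [Dz Oz]; have [u uz] := lift z Dz; exists u; last exact: uz.
      rewrite BC1 -eO; change (D (set_val u) /\ O (set_val u)).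
      by rewrite uz; exact: (conj Dz Oz).
  - exists (~` O2); first exact: open_closedC.
    apply/seteqP; split.
    + move=> z [b Bb <-]; rewrite BC2 in Bb; case: Bb => Db C2b; split => //.
      move=> O2b; have : (set_val @^-1` O2) b by [].
      by rewrite eO2.
    + move=> z [Dz Oz]; have [u uz] := lift z Dz; exists u; last exact: uz.
      rewrite BC2; change (D (set_val u) /\ C2 u); split; first by rewrite uz.
      apply: contrapT => nC2; have : (~` C2) u by [].
      by rewrite -eO2 => h; apply: Oz; rewrite -uz; exact: h.
apply/seteqP; split; first by rewrite BC1 => b [].
move=> u Du; have : (set_val @` B) (set_val u) by rewrite key.
by case=> b Bb /sv_inj <-.
Qed.
End Topo.

Lemma cc_preimage {X : topologicalType} (A : set X) (A0 : set X) (y : set_type A) :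
  connected_component A0 (set_val y) `<=` A ->
  connected_component (set_val @^-1` A0) y = set_val @^-1` connected_component A0 (set_val y).
Proof.
move=> DA; apply/seteqP; split.
- move=> w [C [Cy CA cC] Cw].
  have := connected_component_max (A := A0) (B := set_val @` C) (x := set_val y).
  apply.
  + by exists y.
  + by move=> z [c Cc <-]; exact: CA.
  + exact: conn_image.
  + by exists w.
- move=> w Dw.
  have A0y : A0 (set_val y).
    apply: contrapT => nA; move: Dw; rewrite /preimage connected_component_out //.
  exists (set_val @^-1` connected_component A0 (set_val y)); last exact: Dw.
  split.
  + exact: connected_component_refl.
  + by move=> v; apply: connected_component_sub.
  + apply: conn_preimage => //; exact: component_connected.
Qed.

Lemma image_preimage_sv {X : topologicalType} (A : set X) (D : set X) :
  D `<=` A -> set_val @` (set_val @^-1` D : set (set_type A)) = D.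
Proof.
move=> DA; apply/seteqP; split; first by move=> z [u Du <-].
move=> z Dz; have Az : z \in A by apply/mem_set/DA.
by exists (exist _ z Az); rewrite set_valE.
Qed.

Lemma dim_empty (Y : topologicalType) m (q : set Y -> eint) j
  (s : set_type (stdsimplex j) -> Y) a S :
  (forall v, ~ S (s v)) -> dim_bound m q s a S.
Proof.
move=> h.
have e : set_val @` (s @^-1` S) = set0.
  by apply/seteqP; split => // z [v Sv _]; case: (h v Sv).
rewrite /dim_bound /= e; case: (q S) => // k.
by exists [::]; split => // z [].
Qed.

Lemma simp_op_id j (v : set_type (stdsimplex j)) : simp_op (fun a => a) v = v.
Proof.
apply/val_inj => /=; rewrite set_valE.
by apply/rowP => b; rewrite mxE big_pred1_eq.
Qed.

Section Main.
Context (X : topologicalType) (n : nat) (F : nat -> set X) (p : set X -> eint) (x : X) (i : nat).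
Hypothesis hF : filtered_space n F.
Hypothesis hi : (i < n)%N.
Hypothesis hx : is_stratum_at n F i [set x].

Let U := [set y : X | y <> x].
Let iota := @set_val X U.

Lemma monoF a b : (a <= b)%N -> (b <= n)%N -> F a `<=` F b.
Proof.
case: hF => _ _ inc _ _.
elim: b => [|b IH] ab bn; first by have -> : a = 0%N by lia.
case: (ltngtP a b.+1) => h; last by rewrite h.
- apply: subset_trans (IH _ _) (inc _ _); lia.
- lia.
Qed.

Lemma piece_disj a b z : (a <= n)%N -> (b <= n)%N -> piece F a z -> piece F b z -> a = b.
Proof.
have gen : forall a b, (a < b)%N -> (b <= n)%N -> piece F a z -> piece F b z -> False.
  move=> a' b' ab bn [Fa _] [_ nFb].
  case: b' ab bn nFb => [|b'] ab bn nFb; first lia.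
  apply: nFb; apply: (monoF (a := a')) => //; lia.
move=> an bn pa pb; case: (ltngtP a b) => h //.
- by case: (gen _ _ h bn pa pb).
- by case: (gen _ _ h an pb pa).
Qed.

Lemma strata_eq a b S T z : is_stratum_at n F a S -> is_stratum_at n F b T ->
  S z -> T z -> S = T.
Proof.
move=> [an [y1 py1 eS]] [bn [y2 py2 eT]] Sz Tz.
rewrite eS in Sz; rewrite eT in Tz.
have pa := connected_component_sub Sz; have pb := connected_component_sub Tz.
have eab := piece_disj an bn pa pb; subst b.
by rewrite eS eT (same_connected_component Sz) (same_connected_component Tz).
Qed.

Lemma x_in_stratum a S : is_stratum_at n F a S -> S x -> S = [set x].
Proof. by move=> sS Sx; apply: (strata_eq sS hx Sx). Qed.

Lemma cc_x : connected_component (piece F i) x = [set x].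
Proof.
case: hx => _ [y1 _ e].
have h : connected_component (piece F i) y1 x by rewrite -e.
by rewrite e (same_connected_component h).
Qed.

Lemma piece_ind k : piece (induced_filt U F) k = iota @^-1` piece F k.
Proof.
rewrite /piece /Fprev /induced_filt; case: k => [|k]; apply/seteqP; split => z /=.
- by case.
- by case => h _; split.
- by case.
- by case.
Qed.

Lemma stratum_U_of_X a S : is_stratum_at n F a S -> ~ S x ->
  is_stratum_at n (induced_filt U F) a (iota @^-1` S) /\ iota @` (iota @^-1` S) = S.
Proof.
move=> [an [y0 py0 eS]] nx.
have DU : S `<=` U by move=> z Sz zx; apply: nx; rewrite -zx.
split; last exact: image_preimage_sv.
have y0U : y0 \in U.
  apply/mem_set/DU; rewrite eS; exact: connected_component_refl.
split => //; exists (exist _ y0 y0U).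
  by rewrite piece_ind /preimage /iota set_valE.
rewrite piece_ind cc_preimage /iota set_valE //= -eS //.
Qed.

Lemma iota_U (u : set_type U) : iota u <> x.
Proof. by have := set_valP u; rewrite /iota set_valE. Qed.

Lemma stratum_X_of_U a S : is_stratum_at n (induced_filt U F) a S ->
  [/\ is_stratum_at n F a (iota @` S), ~ (iota @` S) x & S = iota @^-1` (iota @` S)].
Proof.
move=> [an [u pu eS]].
rewrite piece_ind in pu eS.
have nD : ~ connected_component (piece F a) (iota u) x.
  move=> h.
  have pax := connected_component_sub h.
  have pai : piece F i x.
    by case: hx => _ [y1 _ e]; apply: (connected_component_sub (x := y1)); rewrite -e.
  have eai := piece_disj an (ltnW hi) pax pai; subst a.
  have : connected_component (piece F i) (iota u) (iota u) by exact: connected_component_refl.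
  rewrite (same_connected_component h) cc_x; exact: iota_U.
have DU : connected_component (piece F a) (iota u) `<=` U.
  by move=> z Dz zx; apply: nD; rewrite -zx.
rewrite eS cc_preimage // image_preimage_sv //.
split => //.
by split => //; exists (iota u).
Qed.

Lemma induced_perv_val a S : is_stratum_at n (induced_filt U F) a S ->
  induced_perv n F U p S = p (iota @` S).
Proof.
move=> sS; have [sX _ _] := stratum_X_of_U sS.
rewrite /induced_perv.
set P := [set S' : set X | is_stratum n F S' /\ set_val @` S `<=` S'].
have : P (xget set0 P) by apply: xgetPex; exists (iota @` S); hnf; split => //; exists a.
move=> /= [[b sb] sub].
case: (sS) => _ [u pu eS].
have Su : S u by rewrite eS; exact: connected_component_refl pu.
have Iu : (iota @` S) (iota u) by exists u.
by rewrite (strata_eq sb sX (sub _ Iu) Iu).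
Qed.
Definition phi (u0 : set_type U) j (r : set_type (stdsimplex j) -> X)
  : set_type (stdsimplex j) -> set_type U :=
  fun v => match pselect (r v <> x) with
           | left h => exist _ (r v) (mem_set (h : U (r v)))
           | right _ => u0 end.

Lemma iota_phi u0 j (r : set_type (stdsimplex j) -> X) :
  (forall v, r v <> x) -> iota \o phi u0 r = r.
Proof.
move=> rx; apply: funext => v /=; rewrite /phi.
case: pselect => [h|h]; first by rewrite /iota set_valE.
by case: h.
Qed.

Lemma phi_iota u0 j (t : set_type (stdsimplex j) -> set_type U) :
  phi u0 (iota \o t) = t.
Proof.
apply: funext => v /=; rewrite /phi.
case: pselect => [h|h]; last by case: h; exact: iota_U.
by apply: val_inj => /=; rewrite /iota set_valE.
Qed.

Lemma dimb_transfer j (t : set_type (stdsimplex j) -> set_type U) a S :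
  is_stratum_at n (induced_filt U F) a S ->
  dim_bound n (induced_perv n F U p) t a S <-> dim_bound n p (iota \o t) a (iota @` S).
Proof.
move=> sS.
have e : t @^-1` S = (iota \o t) @^-1` (iota @` S).
  apply/seteqP; split => v /=; first by move=> St; exists (t v).
  by case=> w Sw /sv_inj <-.
by rewrite /dim_bound /= (induced_perv_val sS) e.
Qed.

Lemma A1 u0 j (r : set_type (stdsimplex j) -> X) :
  allowable n F p r -> (forall v, r v <> x) ->
  allowable n (induced_filt U F) (induced_perv n F U p) (phi u0 r).
Proof.
move=> ar rx a S an sS.
apply/(dimb_transfer (phi u0 r) sS); rewrite iota_phi //.
have [sX _ _] := stratum_X_of_U sS.
exact: ar.
Qed.

Lemma A2 j (t : set_type (stdsimplex j) -> set_type U) :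
  allowable n (induced_filt U F) (induced_perv n F U p) t ->
  allowable n F p (iota \o t).
Proof.
move=> alt a S an sS.
have [Sx|nSx] := pselect (S x).
  rewrite (x_in_stratum sS Sx); apply: dim_empty => v /= e.
  exact: (iota_U e).
have [sU im] := stratum_U_of_X sS nSx.
rewrite -im; apply/(dimb_transfer t sU).
exact: alt.
Qed.

Lemma full1 u0 j (s : set_type (stdsimplex j) -> X) :
  full n F p s -> (forall v, s v <> x) ->
  full n (induced_filt U F) (induced_perv n F U p) (phi u0 s).
Proof. by move=> fs sx k f mf; exact: (A1 u0 (fs k f mf) (fun v => sx _)). Qed.

Lemma full2 j (t : set_type (stdsimplex j) -> set_type U) :
  full n (induced_filt U F) (induced_perv n F U p) t -> full n F p (iota \o t).
Proof. by move=> ft k f mf; exact: (A2 (ft k f mf)). Qed.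

Lemma cont1 u0 j (s : set_type (stdsimplex j) -> X) :
  continuous s -> (forall v, s v <> x) -> continuous (phi u0 s).
Proof.
move=> cs sx; apply: (@continuous_comp_initial _ _ _ (@set_val X U)).
by have := iota_phi u0 sx; rewrite /iota => ->.
Qed.

Lemma cont2 j (t : set_type (stdsimplex j) -> set_type U) :
  continuous t -> continuous (iota \o t).
Proof. by move=> ct v; apply: continuous_comp; [exact: ct | exact: sv_cont]. Qed.

Lemma G1 u0 j s : Gajer n F p j s -> (forall v, s v <> x) ->
  Gajer n (induced_filt U F) (induced_perv n F U p) j (phi u0 s).
Proof. by move=> [cs fs] sx; split; [exact: cont1|exact: full1]. Qed.

Lemma G2 j t : Gajer n (induced_filt U F) (induced_perv n F U p) j t ->
  Gajer n F p j (iota \o t).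
Proof. by move=> [ct ft]; split; [exact: cont2|exact: full2]. Qed.

Let ell := eadd (dual_perv_at n p i [set x]) (EIFin 1).

Lemma miss_x j (s : set_type (stdsimplex j) -> X) :
  full n F p s -> nat_le_eint j ell -> forall v, s v <> x.
Proof.
move=> fs hj v svx.
have al := fs j (fun a => a) (fun a b h => h).
have := al i [set x] hi hx.
have Pv : (set_val @` ((s \o simp_op (fun a => a)) @^-1` [set x])) (set_val v).
  by exists v => //=; rewrite simp_op_id.
rewrite /dim_bound /=; move: hj Pv; rewrite /ell /dual_perv_at /top_perv_at.
case: (p [set x]) => [|q|] /= hj Pv.
- by move=> e; have := @eq_ind _ _ (fun P => P (set_val v)) Pv _ e.
- case=> ss [hs cov]; have [t tin ht] := cov _ Pv; have := hs t tin.
  case: t tin ht => [|a t] tin ht hsz /=.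
  + case: ht => c [_ s1 _]; move: s1; rewrite big_ord0 => /eqP.
    by rewrite eq_sym oner_eq0.
  + move: hsz hj => /=; lia.
- by case: hj.
Qed.

Lemma SA u0 j s : skel (Gajer n F p) ell j s ->
  (forall v, s v <> x) /\
  skel (Gajer n (induced_filt U F) (induced_perv n F U p)) ell j (phi u0 s).
Proof.
elim: j s => [|j IH] s /= [Gs H].
- have sx : forall v, s v <> x by case: H => // h; exact: (miss_x (proj2 Gs) h).
  by split => //; split; [exact: G1|left; case: H].
- case: H => [h|[k [t [st es]]]].
  + have sx := miss_x (proj2 Gs) h.
    by split => //; split; [exact: G1|left].
  + have [tx st'] := IH t st.
    have sx : forall v, s v <> x by move=> v; rewrite es; exact: tx.
    split => //; split; first exact: G1.
    by right; exists k, (phi u0 t); split => //; rewrite es.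
Qed.

Lemma SB j t : skel (Gajer n (induced_filt U F) (induced_perv n F U p)) ell j t ->
  skel (Gajer n F p) ell j (iota \o t).
Proof.
elim: j t => [|j IH] t /= [Gt H].
- by split; [exact: G2|exact: H].
- split; first exact: G2.
  case: H => [h|[k [t' [st' e]]]]; first by left.
  by right; exists k, (iota \o t'); split; [exact: IH|rewrite e].
Qed.

Lemma main_sec :
  skel_iso (Gajer n F p) (Gajer n (induced_filt U F) (induced_perv n F U p)) ell.
Proof.
have [u0 _] : exists u0 : set_type U, True.
  case: hF => _ _ _ _ Fne.
  have nT : Fprev F n <> setT by move=> e; move: Fne; rewrite e eqxx.
  have [y ny] : exists y, ~ Fprev F n y.
    apply: contrapT => h; apply: nT; apply/seteqP; split => // y _.
    by apply: contrapT => ny; apply: h; exists y.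
  have eF : forall m, (0 < m)%N -> Fprev F m = F m.-1 by case.
  rewrite eF in ny; last lia.
  have Fx : F i x.
    case: hx => _ [y1 _ e].
    have : piece F i x by apply: (connected_component_sub (x := y1)); rewrite -e.
    by case.
  have yx : y <> x.
    move=> e; apply: ny; rewrite e; apply: (monoF (a := i)) => //; lia.
  by exists (exist _ y (mem_set (yx : U y))).
exists (fun j => @phi u0 j); split.
- by move=> j s /(SA u0) [].
- move=> j s t /(SA u0) [sx _] /(SA u0) [tx _] e.
  by rewrite -(iota_phi u0 sx) -(iota_phi u0 tx) e.
- move=> j t st; exists (iota \o t); [exact: SB|exact: phi_iota].
- by [].
- by [].
Qed.
End Main.

Theorem mainTheorem12 (X : topologicalType) (n : nat) (F : nat -> set X)
  (p : set X -> eint) (x : X) (i : nat) :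
  filtered_space n F -> perversity n F p ->
  (i < n)%N -> is_stratum_at n F i [set x] ->
  let U := [set y : X | y <> x] in
  skel_iso (Gajer n F p)
           (Gajer n (induced_filt U F) (induced_perv n F U p))
           (eadd (dual_perv_at n p i [set x]) (EIFin 1)).
Proof.
move=> hF _ hi hx U.
exact: (main_sec p hF hi hx).
Qed.
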